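(* For any single unit-demand buyer with value distribution $\mathcal{D}$ over $m$ items and any production cost vector $c\in\mathbb{R}_+^m$, $$\textsc{BuyManyProfit}_{2c}(\mathcal{D})\leq 2\ln(4m)\,\textsc{SProfit}_{c}(\mathcal{D}).$$
   Context: Unit-demand buyer: valuation $v$ with $v_j\ge0$ per item, $v(S)=\max_{j\in S}v_j$; $\mathcal{D}$ arbitrary (correlated across items). Lotteries $\lambda\in\Delta_m=\{\lambda\in[0,1]^m:\sum_j\lambda_j\le1\}$, $v(\lambda)=\sum_jv_j\lambda_j$. A pricing function $p$ assigns a price $p(\lambda)\ge0$ to every lottery; buyer $v$ chooses $\lambda_{v,p}\in\arg\max_\lambda(v(\lambda)-p(\lambda))$ and pays $p(\lambda_{v,p})$. $p$ is buy-many if no buyer type can get higher utility by adaptively purchasing a (random) sequence of lotteries (each depending on previous outcomes), receiving the union of allocated items and paying the sum of prices, than by buying a single lottery. An item pricing is a vector $(q_1,\dots,q_m)\in\mathbb{R}_+^m$, i.e. $q(\lambda)=\sum_jq_j\lambda_j$. Given production costs $c$, the profit of pricing $p$ is $\textsc{Profit}_{p,c}(\mathcal{D})=\mathbb{E}_{v\sim\mathcal{D}}[p(\lambda_{v,p})-c\cdot\lambda_{v,p}]$; $\textsc{SProfit}_c(\mathcal{D})$ is the maximum profit over item pricings, and $\textsc{BuyManyProfit}_c(\mathcal{D})$ the maximum profit over buy-many pricings. *)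

(* Defs.v *)
From HB Require Import structures.
From mathcomp Require Import all_boot all_order all_algebra.
From mathcomp Require Import all_classical all_reals all_analysis.
Set Implicit Arguments. Unset Strict Implicit. Unset Printing Implicit Defensive.
Import Order.TTheory GRing.Theory Num.Theory.
Local Open Scope ring_scope.
Local Open Scope classical_set_scope.

Section BuyMany.
Variables (R : realType) (m : nat).

(* A lottery over the m items: lam j = probability of receiving item j. *)
Definition lottery := 'I_m -> R.

Definition is_lottery (lam : lottery) : Prop :=
  (forall j, 0 <= lam j <= 1) /\ \sum_(j < m) lam j <= 1.

Definition lot_value (v : 'I_m -> R) (lam : lottery) : R :=
  \sum_(j < m) v j * lam j.

Definition set_value (v : 'I_m -> R) (S : {set 'I_m}) : R :=
  \big[Num.max/0]_(j in S) v j.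

(* An adaptive (finite-horizon) purchasing strategy: stop, or buy a lottery and
   continue depending on its outcome (Some j = item j allocated, None = nothing). *)
Inductive strategy : Type :=
| Stop : strategy
| Buy : lottery -> (option 'I_m -> strategy) -> strategy.

Fixpoint valid_strategy (s : strategy) : Prop :=
  match s with
  | Stop => True
  | Buy lam k => is_lottery lam /\ forall o, valid_strategy (k o)
  end.

(* Expected utility (value of union of allocated items minus total payment)
   of strategy s for buyer v facing pricing p, having already obtained S. *)
Fixpoint strat_utility (v : 'I_m -> R) (p : lottery -> R) (S : {set 'I_m})
    (s : strategy) : R :=
  match s with
  | Stop => set_value v S
  | Buy lam k =>
      - p lam
      + \sum_(j < m) lam j * strat_utility v p (j |: S) (k (Some j))
      + (1 - \sum_(j < m) lam j) * strat_utility v p S (k None)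
  end.

Definition nonneg_vec (v : 'I_m -> R) : Prop := forall j, 0 <= v j.

Definition pricing (p : lottery -> R) : Prop :=
  forall lam, is_lottery lam -> 0 <= p lam.

(* Buy-many: no buyer type gains by an adaptive sequence of purchases compared
   to (the supremum of utilities of) buying a single lottery. *)
Definition buy_many (p : lottery -> R) : Prop :=
  pricing p /\
  forall v : 'I_m -> R, nonneg_vec v ->
  forall s : strategy, valid_strategy s ->
  forall eps : R, 0 < eps ->
  exists2 lam, is_lottery lam &
    strat_utility v p (finset.set0 : {set 'I_m}) s - eps < lot_value v lam - p lam.

Definition item_pricing (q : 'I_m -> R) : lottery -> R := lot_value q.

Definition optimal_choice (p : lottery -> R) (v : 'I_m -> R) (lam : lottery) : Prop :=
  is_lottery lam /\
  forall mu, is_lottery mu -> lot_value v mu - p mu <= lot_value v lam - p lam.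

Section Profit.
Variables (d : measure_display) (T : measurableType d) (P : probability T R)
  (val : T -> 'I_m -> R).

Definition profit_integrand (p : lottery -> R) (c : 'I_m -> R) (sel : T -> lottery)
    (t : T) : R :=
  p (sel t) - lot_value c (sel t).

Definition admissible (p : lottery -> R) (c : 'I_m -> R) (sel : T -> lottery) : Prop :=
  (forall t, optimal_choice p (val t) (sel t)) /\
  measurable_fun setT (profit_integrand p c sel).

Definition Profit (p : lottery -> R) (c : 'I_m -> R) (sel : T -> lottery) : \bar R :=
  (\int[P]_t (profit_integrand p c sel t)%:E)%E.

Definition SProfit (c : 'I_m -> R) : \bar R :=
  ereal_sup [set r | exists q sel, [/\ nonneg_vec q,
     admissible (item_pricing q) c sel & r = Profit (item_pricing q) c sel]].

Definition BuyManyProfit (c : 'I_m -> R) : \bar R :=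
  ereal_sup [set r | exists p sel, [/\ buy_many p,
     admissible p c sel & r = Profit p c sel]].
End Profit.
End BuyMany.

(* Main.v *)
Require Import Defs.
From HB Require Import structures.
From mathcomp Require Import all_boot all_order all_algebra.
From mathcomp Require Import all_classical all_reals all_analysis.
From mathcomp Require Import lra ring.
Import Order.TTheory GRing.Theory Num.Theory.
Local Open Scope ring_scope.
Local Open Scope classical_set_scope.
Set Implicit Arguments. Unset Strict Implicit. Unset Printing Implicit Defensive.

Lemma lot_le_max (R : realType) (m : nat) (x : 'I_m -> R) (mu : lottery R m) (M : R) :
  is_lottery mu -> (forall j, x j <= M) -> 0 <= M -> lot_value x mu <= M.
Proof.
move=> [h01 hs] hx M0; rewrite /lot_value.
apply: (@le_trans _ _ (\sum_(j < m) M * mu j)).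
  apply: ler_sum => j _; apply: ler_wpM2r; [by case/andP: (h01 j)|exact: hx].
by rewrite -mulr_sumr; apply: ler_piMr.
Qed.

Lemma lot_valueB (R : realType) (m : nat) (x y : 'I_m -> R) (mu : lottery R m) :
  lot_value x mu - lot_value y mu = lot_value (fun j => x j - y j) mu.
Proof.
by rewrite /lot_value -sumrB; apply: eq_bigr => j _; rewrite mulrBl.
Qed.

Lemma set_value_ge0 (R : realType) (m : nat) (v : 'I_m -> R) (S : {set 'I_m}) :
  nonneg_vec v -> 0 <= set_value v S.
Proof.
move=> hv; rewrite /set_value; elim/big_ind: _ => //.
by move=> x y x0 y0; rewrite le_max x0.
Qed.

Lemma set_value_ge (R : realType) (m : nat) (v : 'I_m -> R) (S : {set 'I_m}) j :
  j \in S -> v j <= set_value v S.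
Proof.
by move=> jS; rewrite /set_value (bigD1 j) //= le_max lexx.
Qed.

Lemma set_value0 (R : realType) (m : nat) (v : 'I_m -> R) :
  set_value v (finset.set0 : {set 'I_m}) = 0.
Proof. by rewrite /set_value big_pred0 // => i; rewrite inE. Qed.

Lemma ge0_of_eps (R : realType) (x : R) : (forall e, 0 < e -> - e < x) -> 0 <= x.
Proof.
move=> h; rewrite leNgt; apply/negP => x0.
by move: (h (- x)); rewrite oppr_gt0 opprK ltxx => /(_ x0).
Qed.

Lemma le_of_eps (R : realType) (x y : R) : (forall e, 0 < e -> x - e < y) -> x <= y.
Proof.
move=> h; rewrite -subr_ge0; apply: ge0_of_eps => e e0.
by have := h e e0; lra.
Qed.

Fixpoint rep (R : realType) (m : nat) (mu : lottery R m) (j : 'I_m) (N : nat) : strategy R m :=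
  match N with
  | 0 => @Stop R m
  | N'.+1 => Buy mu (fun o => if o == Some j then @Stop R m else @rep R m mu j N')
  end.
Arguments rep {R m}.

Lemma rep_valid (R : realType) (m : nat) (mu : lottery R m) j N :
  is_lottery mu -> valid_strategy (@rep R m mu j N).
Proof.
move=> hmu; elim: N => [|N IH] //=; split => // o.
by case: ifP.
Qed.

Lemma rep_util (R : realType) (m : nat) (v : 'I_m -> R) (p : lottery R m -> R)
  (mu : lottery R m) j :
  nonneg_vec v -> is_lottery mu -> 0 < mu j -> forall N (S : {set 'I_m}),
  (v j - p mu / mu j) * (1 - (1 - mu j) ^+ N) <= strat_utility v p S (rep mu j N).
Proof.
move=> hv hmu muj; have [h01 hs] := hmu.
have mu0 : forall i, 0 <= mu i by move=> i; case/andP: (h01 i).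
elim=> [|N IH] S /=.
  by rewrite expr0 subrr mulr0; exact: set_value_ge0.
set F := (v j - p mu / mu j) * (1 - (1 - mu j) ^+ N).
have key : mu j * v j + (\sum_(i < m) mu i - mu j) * F <=
   \sum_(i < m) mu i * strat_utility v p (i |: S)
      (if Some i == Some j then @Stop R m else rep mu j N).
  rewrite [X in _ <= X](bigD1 j) //= eqxx [\sum_(i < m) mu i](bigD1 j) //=.
  have -> : mu j + \sum_(i < m | i != j) mu i - mu j = \sum_(i < m | i != j) mu i.
    by rewrite addrAC subrr add0r.
  apply: lerD.
    by apply: ler_wpM2l; [exact: mu0| apply: set_value_ge; rewrite setU11].
  rewrite mulr_suml; apply: ler_sum => i ij.
  have -> : (Some i == Some j) = false by apply/negbTE; move: ij; apply: contra => /eqP [->].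
  by apply: ler_wpM2l; [exact: mu0|exact: IH].
have hU := IH S.
have hs0 : 0 <= 1 - \sum_(i < m) mu i by rewrite subr_ge0.
have key2 : (1 - \sum_(i < m) mu i) * F <= (1 - \sum_(i < m) mu i) * strat_utility v p S (rep mu j N).
  exact: ler_wpM2l.
have e : (v j - p mu / mu j) * (1 - (1 - mu j) ^+ N.+1) =
   - p mu + (mu j * v j + (\sum_(i < m) mu i - mu j) * F) + (1 - \sum_(i < m) mu i) * F.
  rewrite /F exprS; field; exact: lt0r_neq0.
rewrite e; move: key key2; set A := \sum_(i < m) _ * _; set B := (_ * strat_utility _ _ _ _).
move=> key key2; lra.
Qed.

Lemma small_pow (R : realType) (x e : R) : 0 <= x < 1 -> 0 < e -> exists N : nat, x ^+ N < e.
Proof.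
move=> /andP[x0 x1] e0.
have hx : `|x| < 1 by rewrite ger0_norm.
have /cvgrPdist_lt /(_ e e0) := cvg_expr hx.
move=> [N _ /(_ N (leqnn N))] /=.
rewrite sub0r normrN ger0_norm ?exprn_ge0 // => h.
by exists N.
Qed.

Lemma bm_U_ge0 (R : realType) (m : nat) (p : lottery R m -> R) v lam :
  buy_many p -> nonneg_vec v -> optimal_choice p v lam ->
  0 <= lot_value v lam - p lam.
Proof.
move=> [_ hbm] hv [hlam hopt]; apply: ge0_of_eps => e e0.
have [nu hnu] := hbm v hv (@Stop R m) I e e0.
rewrite /= set_value0 sub0r => h.
exact: (lt_le_trans h (hopt nu hnu)).
Qed.

Lemma bm_U_ge (R : realType) (m : nat) (p : lottery R m -> R) v lam mu j :
  buy_many p -> nonneg_vec v -> optimal_choice p v lam ->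
  is_lottery mu -> 0 < mu j ->
  v j - p mu / mu j <= lot_value v lam - p lam.
Proof.
move=> hp hv [hlam hopt] hmu muj.
set U := lot_value v lam - p lam.
set D := v j - p mu / mu j.
have hN : forall N, D * (1 - (1 - mu j) ^+ N) <= U.
  move=> N; apply: le_of_eps => e e0.
  have [_ hbm] := hp.
  have [nu hnu] := hbm v hv (rep mu j N) (rep_valid j N hmu) e e0.
  move=> h; apply: (lt_le_trans _ (hopt nu hnu)).
  apply: le_lt_trans h; rewrite lerD2r.
  exact: rep_util.
have U0 : 0 <= U by apply: (bm_U_ge0 hp hv).
have [D0|D0] := leP D 0; first exact: le_trans D0 U0.
rewrite leNgt; apply/negP => UD.
have [h01 _] := hmu.
have hx : 0 <= 1 - mu j < 1.
  by case/andP: (h01 j) => _ mj1; rewrite subr_ge0 mj1 /= ltrBlDr ltrDl.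
have eps0 : 0 < (D - U) / D by apply: divr_gt0 => //; rewrite subr_gt0.
have [N hN'] := small_pow hx eps0.
have := hN N.
have : D * (1 - mu j) ^+ N < D - U.
  by rewrite mulrC -ltr_pdivlMr.
lra.
Qed.

Definition qset (R : realType) (m : nat) (p : lottery R m -> R) (j : 'I_m) : set R :=
  [set r | exists mu : lottery R m, [/\ is_lottery mu, 0 < mu j & r = p mu / mu j]].

Definition qv (R : realType) (m : nat) (p : lottery R m -> R) (j : 'I_m) : R :=
  inf (qset p j).

Definition ej (R : realType) (m : nat) (j : 'I_m) : lottery R m := fun i => (i == j)%:R.

Lemma ej_lottery (R : realType) (m : nat) (j : 'I_m) : is_lottery (ej R j).
Proof.
split.
  by move=> i; rewrite /ej; case: (i == j); rewrite /= ?lexx ?ler01.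
rewrite (bigD1 j) //= big1 ?addr0 /ej ?eqxx //.
by move=> i /negbTE ->.
Qed.

Lemma qset_n0 (R : realType) (m : nat) (p : lottery R m -> R) j : qset p j !=set0.
Proof.
exists (p (ej R j) / ej R j j); exists (ej R j); split => //; first exact: ej_lottery.
by rewrite /ej eqxx ltr01.
Qed.

Lemma qset_lb (R : realType) (m : nat) (p : lottery R m -> R) j :
  pricing p -> lbound (qset p j) 0.
Proof.
move=> hp r [mu [hmu muj ->]]; apply: divr_ge0; first exact: hp.
exact: ltW.
Qed.

Lemma qv_ge0 (R : realType) (m : nat) (p : lottery R m -> R) j :
  pricing p -> 0 <= qv p j.
Proof. by move=> hp; apply: lb_le_inf; [exact: qset_n0|exact: qset_lb]. Qed.

Lemma qv_le (R : realType) (m : nat) (p : lottery R m -> R) j mu :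
  pricing p -> is_lottery mu -> 0 < mu j -> qv p j <= p mu / mu j.
Proof.
move=> hp hmu muj; apply: ge_inf; first by exists 0; exact: qset_lb.
by exists mu.
Qed.

Lemma bm_q (R : realType) (m : nat) (p : lottery R m -> R) v lam j :
  buy_many p -> nonneg_vec v -> optimal_choice p v lam ->
  v j - qv p j <= lot_value v lam - p lam.
Proof.
move=> hp hv hopt.
suff : v j - (lot_value v lam - p lam) <= qv p j by lra.
apply: lb_le_inf; first exact: qset_n0.
move=> r [mu [hmu muj ->]].
have := bm_U_ge hp hv hopt hmu muj; lra.
Qed.

Lemma lam_q (R : realType) (m : nat) (p : lottery R m -> R) lam j :
  pricing p -> is_lottery lam -> lam j * qv p j <= p lam.
Proof.
move=> hp hlam; have [h01 _] := hlam.
have [lj0|lj0] := eqVneq (lam j) 0.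
  by rewrite lj0 mul0r; exact: hp.
have ljp : 0 < lam j by rewrite lt0r lj0; case/andP: (h01 j).
by rewrite mulrC -ler_pdivlMr //; exact: qv_le.
Qed.

Lemma bigandP (I : finType) (P B : pred I) :
  reflect (forall k, P k -> B k) (\big[andb/true]_(k | P k) B k).
Proof.
rewrite big_all_cond; apply: (iffP allP) => h k.
  by move=> Pk; exact: (implyP (h k (mem_index_enum k))).
by move=> _; apply/implyP; exact: h.
Qed.

Definition chosenb (R : realType) (m : nat) (u : 'I_m -> R) (i : 'I_m) : bool :=
  [&& (0 <= u i), \big[andb/true]_(k < m) (u k <= u i)
   & \big[andb/true]_(k < m | (k < i)%N) (u k < u i)].

Definition isel (R : realType) (m : nat) (u : 'I_m -> R) : lottery R m :=
  fun i => (chosenb u i)%:R.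

Lemma chosenP (R : realType) (m : nat) (u : 'I_m -> R) i :
  chosenb u i -> [/\ 0 <= u i, forall k : 'I_m, u k <= u i & forall k : 'I_m, (k < i)%N -> u k < u i].
Proof.
case/and3P => h1 /bigandP h2 /bigandP h3; split => // k.
exact: h2.
Qed.

Lemma chosen_uniq (R : realType) (m : nat) (u : 'I_m -> R) i i' :
  chosenb u i -> chosenb u i' -> i = i'.
Proof.
move=> /chosenP[_ a1 b1] /chosenP[_ a2 b2].
case: (ltngtP i i') => [lt|lt|eq]; last exact: val_inj.
  by have := b2 _ lt; rewrite ltNge a1.
by have := b1 _ lt; rewrite ltNge a2.
Qed.

Lemma chosen_ex (R : realType) (m : nat) (u : 'I_m -> R) i0 :
  0 <= u i0 -> exists i, chosenb u i.
Proof.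
move=> u0.
have [imax _ hmax] := @Order.TotalTheory.arg_maxP _ _ _ i0 xpredT u isT.
have [i /eqP ui hmin] := @arg_minnP _ imax (fun k => u k == u imax) (fun k => nat_of_ord k) (eqxx _).
exists i; apply/and3P; split.
- by rewrite ui; apply: le_trans u0 (hmax i0 isT).
- by apply/bigandP => k _; rewrite ui; exact: hmax.
- apply/bigandP => k ki; have hk : u k <= u imax := hmax k isT.
  rewrite lt_neqAle ui hk andbT.
  apply/negP => /eqP e; have := hmin k; rewrite e eqxx => /(_ isT).
  by rewrite leqNgt ki.
Qed.

Lemma lot_value_isel (R : realType) (m : nat) (u x : 'I_m -> R) :
  (forall i, chosenb u i -> lot_value x (isel u) = x i) /\
  ((forall i, ~~ chosenb u i) -> lot_value x (isel u) = 0).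
Proof.
split.
  move=> i ci; rewrite /lot_value (bigD1 i) //= big1 ?addr0 /isel ?ci ?mulr1 //.
  move=> k ki; case ck: (chosenb u k); last by rewrite mulr0.
  by move: ki; rewrite (chosen_uniq ck ci) eqxx.
move=> h; rewrite /lot_value big1 // => k _.
by rewrite /isel (negbTE (h k)) mulr0.
Qed.

Lemma isel_lottery (R : realType) (m : nat) (u : 'I_m -> R) : is_lottery (isel u).
Proof.
split.
  by move=> i; rewrite /isel; case: (chosenb u i); rewrite /= ?lexx ?ler01.
have [[i ci]|nc] := pselect (exists i, chosenb u i).
  have := (lot_value_isel u (fun _ => 1)).1 i ci.
  rewrite /lot_value; under eq_bigr do rewrite mul1r.
  by move=> ->.
have nc' : forall i, ~~ chosenb u i by move=> i; apply/negP => ci; apply: nc; exists i.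
have := (lot_value_isel u (fun _ => 1)).2 nc'.
rewrite /lot_value; under eq_bigr do rewrite mul1r.
by move=> ->; rewrite ler01.
Qed.

Lemma isel_opt (R : realType) (m : nat) (u : 'I_m -> R) (mu : lottery R m) :
  is_lottery mu -> lot_value u mu <= lot_value u (isel u).
Proof.
move=> hmu.
have [[i ci]|nc] := pselect (exists i, chosenb u i).
  rewrite ((lot_value_isel u u).1 i ci).
  have [h1 h2 _] := chosenP ci.
  exact: lot_le_max.
have nc' : forall i, ~~ chosenb u i by move=> i; apply/negP => ci; apply: nc; exists i.
rewrite ((lot_value_isel u u).2 nc'); apply: lot_le_max => // k.
rewrite leNgt; apply/negP => uk; apply: nc; apply: (@chosen_ex _ _ u k).
exact: ltW.
Qed.

Lemma isel_optimal (R : realType) (m : nat) (w v : 'I_m -> R) :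
  optimal_choice (item_pricing w) v (isel (fun i => v i - w i)).
Proof.
split; first exact: isel_lottery.
move=> mu hmu; rewrite /item_pricing !lot_valueB.
exact: isel_opt.
Qed.

Lemma meas_bigand (d : measure_display) (T : measurableType d) (I : Type) (s : seq I)
  (P : pred I) (f : I -> T -> bool) :
  (forall k, measurable_fun setT (f k)) ->
  measurable_fun setT (fun t => \big[andb/true]_(k <- s | P k) f k t).
Proof.
move=> hf; elim: s => [|h s ih].
  under eq_fun do rewrite big_nil.
  exact: measurable_cst.
under eq_fun do rewrite big_cons.
case: (P h) => //.
exact: measurable_and.
Qed.

Lemma meas_boolR (d : measure_display) (T : measurableType d) (R : realType) (b : T -> bool) :
  measurable_fun setT b -> measurable_fun setT (fun t => (b t)%:R : R).
Proof.
move=> mb.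
have mA : measurable [set t | b t].
  have := mb measurableT [set true] I.
  by rewrite setTI.
have := @measurable_realfun.measurable_indic _ T R setT _ mA.
apply: eq_measurable_fun => t _.
rewrite indicE.
have [h|h] := boolP (b t).
  by rewrite mem_set.
by rewrite memNset //= ; apply/negP.

Qed.

Lemma meas_chosen (d : measure_display) (T : measurableType d) (R : realType) (m : nat)
  (val : T -> 'I_m -> R) (w : 'I_m -> R) i :
  (forall j, measurable_fun setT (fun t => val t j)) ->
  measurable_fun setT (fun t => chosenb (fun k => val t k - w k) i).
Proof.
move=> hv.
have mu : forall k, measurable_fun setT (fun t => val t k - w k).
  by move=> k; apply: measurable_realfun.measurable_funB => //; exact: measurable_cst.
apply: measurable_and; first by apply: measurable_realfun.measurable_fun_ler => //; exact: measurable_cst.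
apply: measurable_and; apply: meas_bigand => k.
  exact: measurable_realfun.measurable_fun_ler.
exact: measurable_realfun.measurable_fun_ltr.
Qed.

Lemma meas_lot_isel (d : measure_display) (T : measurableType d) (R : realType) (m : nat)
  (val : T -> 'I_m -> R) (w x : 'I_m -> R) :
  (forall j, measurable_fun setT (fun t => val t j)) ->
  measurable_fun setT (fun t => lot_value x (isel (fun k => val t k - w k))).
Proof.
move=> hv; rewrite /lot_value /isel.
apply: measurable_sum => i.
apply: measurable_realfun.measurable_funM; first exact: measurable_cst.
apply: meas_boolR; exact: meas_chosen.
Qed.

Lemma lot_lin (R : realType) (m : nat) (v c q : 'I_m -> R) (th : R) (mu : lottery R m) :
  lot_value (fun i => v i - (c i + th * q i)) mu =
  lot_value v mu - lot_value c mu - th * lot_value q mu.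
Proof.
rewrite /lot_value mulr_sumr -!sumrB; apply: eq_bigr => i _; ring.
Qed.

Lemma lot_value_ge0 (R : realType) (m : nat) (q : 'I_m -> R) (mu : lottery R m) :
  (forall j, 0 <= q j) -> is_lottery mu -> 0 <= lot_value q mu.
Proof.
move=> hq [h01 _]; apply: sumr_ge0 => i _; apply: mulr_ge0 => //.
by case/andP: (h01 i).
Qed.

Definition th (R : realType) (m k : nat) : R := (k.+2)%:R / (4 * m)%:R.

Lemma telescope (R : realType) (V Z : nat -> R) (K : nat) (U : R) :
  (0 < K)%N -> (forall k, (k.+1 < K)%N -> V k - Z k <= V k.+1) ->
  V K.-1 - Z K.-1 <= U -> V 0%N - \sum_(k < K) Z k <= U.
Proof.
move=> K0 hstep hlast.
have claim : forall n, (n < K)%N -> V 0%N - \sum_(k < n) Z k <= V n.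
  elim=> [|n IH] hn; first by rewrite big_ord0 subr0.
  rewrite big_ord_recr /=.
  have := IH (ltnW hn); have := hstep n hn; lra.
have hK : (K.-1 < K)%N by rewrite prednK.
have := claim K.-1 hK.
have -> : \sum_(k < K) Z k = \sum_(k < K.-1.+1) Z k by rewrite prednK.
rewrite big_ord_recr /=.
move: hlast; lra.
Qed.

Lemma th_succ (R : realType) (m k : nat) : (0 < m)%N ->
  th R m k.+1 = th R m k + 1 / (4 * m)%:R.
Proof.
move=> m0; rewrite /th -mulrDl; congr (_ / _).
by rewrite -addn1 natrD.
Qed.

Lemma th_last (R : realType) (m : nat) : (0 < m)%N -> th R m (4 * m - 2).-1.+1 = 1.
Proof.
move=> m0; rewrite /th.
have -> : ((4 * m - 2).-1.+1.+2 = 4 * m)%N.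
  rewrite prednK; last by rewrite subn_gt0; apply: (@leq_trans 4) => //; rewrite leq_pmulr.
  by rewrite -addn2 subnK //; apply: (@leq_trans 4) => //; rewrite leq_pmulr.
by rewrite divff // pnatr_eq0 muln_eq0 /= -lt0n m0.
Qed.

Lemma per_t (R : realType) (m : nat) (v c q : 'I_m -> R) (lam : lottery R m) (P : R)
  (s : nat -> lottery R m) :
  (0 < m)%N -> (forall j, 0 <= c j) -> is_lottery lam -> (forall k, is_lottery (s k)) ->
  (forall k mu, is_lottery mu ->
     lot_value (fun i => v i - (c i + th R m k * q i)) mu <=
     lot_value (fun i => v i - (c i + th R m k * q i)) (s k)) ->
  0 <= lot_value v lam - P -> (forall j, v j - q j <= lot_value v lam - P) ->
  (forall j, lam j * q j <= P) ->
  P - 2 * lot_value c lam <= 2 * \sum_(k < (4 * m - 2)) (lot_value q (s k) / (4 * m)%:R).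
Proof.
move=> m0 hc hlam hs hopt U0 hU hlq.
set K := (4 * m - 2)%N.
have K0 : (0 < K)%N by rewrite /K subn_gt0; apply: (@leq_trans 4) => //; rewrite leq_pmulr.
set U := lot_value v lam - P.
set V := fun k => lot_value (fun i => v i - (c i + th R m k * q i)) (s k).
set Z := fun k => lot_value q (s k) / (4 * m)%:R.
have key : V 0%N - \sum_(k < K) Z k <= U.
  apply: telescope => //.
    move=> k _; apply: le_trans (hopt k.+1 (s k) (hs k)).
    rewrite /V /Z !lot_lin th_succ //; lra.
  have -> : V K.-1 - Z K.-1 = lot_value (fun i => v i - (c i + th R m K.-1.+1 * q i)) (s K.-1).
    by rewrite /V /Z !lot_lin th_succ //; ring.
  rewrite th_last //.
  apply: lot_le_max => // i; move: (hU i) (hc i); rewrite /U mul1r; lra.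
have h0 := hopt 0%N lam hlam.
rewrite lot_lin in h0.
have hq : lot_value q lam <= P *+ m.
  have -> : P *+ m = \sum_(j < m) P by rewrite sumr_const card_ord.
  rewrite /lot_value; apply: ler_sum => j _.
  by rewrite mulrC.
have mR : (0 < m%:R :> R) by rewrite ltr0n.
have hth : th R m 0 * lot_value q lam <= P / 2.
  have -> : P / 2 = th R m 0 * (P *+ m).
    rewrite /th -mulr_natr natrM; field.
    exact: lt0r_neq0.
  have th0 : 0 <= th R m 0 by rewrite /th; apply: divr_ge0.
  exact: (ler_wpM2l th0 hq).
move: key h0 hth; rewrite /V /U; lra.
Qed.

Lemma harm (R : realType) n : \sum_(k < n) (1 / (k.+2)%:R : R) <= ln (n.+1%:R).
Proof.
elim: n => [|n IH]; first by rewrite big_ord0 ln1.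
rewrite big_ord_recr /=.
have h : 1 / n.+2%:R <= ln (n.+2%:R : R) - ln n.+1%:R.
  have n2 : (0 : R) < n.+2%:R by rewrite ltr0n.
  have n1 : (0 : R) < n.+1%:R by rewrite ltr0n.
  have hx : -1 < - (1 / (n.+2%:R : R)).
    rewrite ltrN2 ltr_pdivrMr // mul1r ltr1n //.
  have := le_ln1Dx hx.
  have -> : 1 + - (1 / (n.+2%:R : R)) = n.+1%:R / n.+2%:R.
    have e : (n.+2%:R : R) = n.+1%:R + 1 by rewrite natr1.
    rewrite e; field.
    by apply: lt0r_neq0; have := ler0n R n; lra.
  rewrite ln_div ?posrE //.
  by move=> H; rewrite -lerN2 opprB.
by apply: le_trans (lerD IH h) _; rewrite addrC subrK.
Qed.

Lemma harm4 (R : realType) m : (0 < m)%N ->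
  \sum_(k < (4 * m - 2)) (1 / (k.+2)%:R : R) <= ln (4 * m%:R).
Proof.
move=> m0; apply: le_trans (harm R _) _.
have h4 : (4 <= 4 * m)%N by rewrite leq_pmulr.
rewrite ler_ln ?posrE ?ltr0n //; last by rewrite mulr_gt0 // ltr0n.
rewrite -[4 : R]/(4%:R) -natrM ler_nat.
by rewrite -subSn; [rewrite subSS leq_subr|apply: leq_trans h4].
Qed.

Theorem theorem6 (R : realType) (m : nat) (d : measure_display)
  (T : measurableType d) (P : probability T R) (val : T -> 'I_m -> R)
  (c : 'I_m -> R) :
  (forall t j, 0 <= val t j) ->
  (forall j, measurable_fun setT (fun t => val t j)) ->
  (forall j, 0 <= c j) ->
  (BuyManyProfit P val (fun j => (2 * c j)%R)
     <= ((2 * ln (4 * m%:R))%R)%:E * SProfit P val c)%E.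
Proof.
move=> hv hmeas hc.
apply: ge_ereal_sup => r [p [sel [hbm [hopt hmf] ->]]].
have hpr : pricing p := hbm.1.
have hU0 : forall t, 0 <= lot_value (val t) (sel t) - p (sel t).
  by move=> t; apply: (bm_U_ge0 hbm (hv t) (hopt t)).
have hf2 : forall t, lot_value (fun j => 2 * c j) (sel t) = 2 * lot_value c (sel t).
  by move=> t; rewrite /lot_value mulr_sumr; apply: eq_bigr => j _; rewrite mulrA.
case: (posnP m) => [m0|m0].
  subst m.
  have -> : ln (4 * 0%:R : R) = 0 by rewrite mulr0 ln0.
  rewrite mulr0 mul0e /Profit.
  rewrite (@eq_integral _ _ _ P setT (cst 0%E)) ?integral0 // => t _.
  have l0 : forall x : 'I_0 -> R, lot_value x (sel t) = 0.
    by move=> x; rewrite /lot_value big_ord0.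
  have := hU0 t; have := hpr (sel t) (hopt t).1.
  rewrite /profit_integrand !l0 /= => h1 h2.
  have -> : p (sel t) = 0 by apply/eqP; rewrite eq_le h1 andbT; move: h2; lra.
  by rewrite subr0.
set q := qv p.
set K := (4 * m - 2)%N.
set w := fun (k : nat) (j : 'I_m) => c j + th R m k * q j.
set s := fun (k : nat) (t : T) => isel (fun i => val t i - w k i).
have th0 : forall k, 0 <= th R m k by move=> k; rewrite /th; apply: divr_ge0.
have q0 : forall j, 0 <= q j by move=> j; exact: qv_ge0.
have hw : forall k, nonneg_vec (w k).
  by move=> k j; rewrite /w; apply: addr_ge0 => //; apply: mulr_ge0.
have hadm : forall k, admissible val (item_pricing (w k)) c (s k).
  move=> k; split; first by move=> t; exact: isel_optimal.
  rewrite /profit_integrand /item_pricing.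
  by apply: measurable_realfun.measurable_funB; exact: meas_lot_isel.
have hg : forall k t, profit_integrand (item_pricing (w k)) c (s k) t =
    th R m k * lot_value q (s k t).
  move=> k t; rewrite /profit_integrand /item_pricing /lot_value mulr_sumr -sumrB.
  by apply: eq_bigr => i _ ; rewrite /w; ring.
have hSk : forall k, (Profit P (item_pricing (w k)) c (s k) <= SProfit P val c)%E.
  move=> k; apply: ereal_sup_ubound; exists (w k), (s k); split => //.
have S0 : (0 <= SProfit P val c)%E.
  apply: le_trans (hSk 0%N); rewrite /Profit; apply: integral_ge0 => t _.
  rewrite lee_fin hg; apply: mulr_ge0 => //; apply: lot_value_ge0 => //.
  exact: isel_lottery.
set G := fun t => \sum_(k < K) (2 / (k.+2)%:R) * profit_integrand (item_pricing (w k)) c (s k) t.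
have hfG : forall t, profit_integrand p (fun j => 2 * c j) sel t <= G t.
  move=> t; rewrite /profit_integrand hf2.
  apply: le_trans (@per_t R m (val t) c q (sel t) (p (sel t)) (fun k => s k t) m0 hc (hopt t).1 _ _ (hU0 t) _ _) _.
  - by move=> k; exact: isel_lottery.
  - by move=> k mu hmu; exact: isel_opt.
  - by move=> j; apply: bm_q => //; exact: hopt.
  - by move=> j; apply: lam_q => //; exact: (hopt t).1.
  rewrite /G mulr_sumr; apply: ler_sum => k _; rewrite hg /th.
  rewrite le_eqVlt; apply/orP; left; apply/eqP; field.
  rewrite pnatr_eq0 -lt0n m0 /=; apply: lt0r_neq0; have := ler0n R k; lra.
have hgk0 : forall k t, 0 <= profit_integrand (item_pricing (w k)) c (s k) t.
  move=> k t; rewrite hg; apply: mulr_ge0 => //; apply: lot_value_ge0 => //.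
  exact: isel_lottery.
have ak0 : forall k : nat, (0 : R) <= 2 / (k.+2)%:R by move=> k; apply: divr_ge0.
have Gge0 : forall t, 0 <= G t.
  by move=> t; apply: sumr_ge0 => k _; apply: mulr_ge0.
have mG : measurable_fun setT G.
  apply: measurable_sum => k.
  apply: measurable_realfun.measurable_funM; first exact: measurable_cst.
  exact: (hadm k).2.
have h1 : (Profit P p (fun j => (2 * c j)%R) sel <= \int[P]_t (G t)%:E)%E.
  rewrite /Profit integralE.
  apply: le_trans (geeDl _ _) _; first by rewrite oppe_le0; apply: integral_ge0 => t _; exact: funeneg_ge0.
  apply: ge0_le_integral => //.
  - apply: measurable_realfun.measurable_funepos; apply/measurable_realfun.measurable_EFinP; exact: hmf.
  - by apply/measurable_realfun.measurable_EFinP; exact: mG.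
  - move=> t _; rewrite funeposE ge_max lee_fin hfG /= lee_fin; exact: Gge0.
have h2 : (\int[P]_t (G t)%:E = \sum_(k < K) (2 / (k.+2)%:R)%:E * Profit P (item_pricing (w k)) c (s k))%E.
  rewrite /G; under eq_integral do rewrite -sumEFin.
  rewrite ge0_integral_sum //.
  - apply: eq_bigr => k _; under eq_integral do rewrite EFinM.
    rewrite ge0_integralZl_EFin //.
      by move=> t _; rewrite lee_fin.
    by apply/measurable_realfun.measurable_EFinP; exact: (hadm k).2.
  - move=> k; apply/measurable_realfun.measurable_EFinP.
    apply: measurable_realfun.measurable_funM; first exact: measurable_cst.
    exact: (hadm k).2.
  - by move=> k t _; rewrite lee_fin; apply: mulr_ge0.
apply: le_trans h1 _; rewrite h2.
have hPk0 : forall k, (0 <= Profit P (item_pricing (w k)) c (s k))%E.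
  by move=> k; apply: integral_ge0 => t _; rewrite lee_fin.
have hsum : \sum_(k < K) (2 / (k.+2)%:R : R) <= 2 * ln (4 * m%:R).
  have -> : \sum_(k < K) (2 / (k.+2)%:R : R) = 2 * \sum_(k < K) (1 / (k.+2)%:R).
    by rewrite mulr_sumr; apply: eq_bigr => k _; rewrite mul1r.
  by apply: ler_wpM2l => //; exact: harm4.
have hSk' := hSk.
case ES: (SProfit P val c) hSk' S0 => [s0| |] hSk' S0.
- have s00 : 0 <= s0 by move: S0; rewrite lee_fin.
  apply: (@le_trans _ _ (\sum_(k < K) ((2 / (k.+2)%:R) * s0)%:E)%E).
    apply: lee_sum => k _; rewrite (EFinM (2 / _) s0); apply: lee_pmul => //.
  rewrite sumEFin -EFinM lee_fin -mulr_suml; exact: ler_wpM2r.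
- rewrite gt0_muley ?leey // lte_fin; apply: mulr_gt0 => //.
  apply: ln_gt0.
  have : (4 : R) <= 4 * m%:R by rewrite ler_peMr // ler1n.
  lra.
- by [].
Qed.
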